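(* Let $(\mathcal{S},\mathcal{A},P,R,d_0,\gamma)$ be a finite Markov decision process with bounded reward and discount $\gamma\in[0,1)$, $\pi$ a policy, and $\lambda\in[0,1]$, and assume the Markov chain on states induced by $\pi$ is ergodic, with stationary distribution $d^\pi$. Let $\overleftarrow{G}_t=\sum_{i=1}^t(\lambda\gamma)^iR_{t-i}$. Then the limit $\lim_{t\to\infty}\mathbb{E}[\overleftarrow{G}_t\mid S_t=s]=: \overleftarrow{v}^\pi(s)$ exists, and the operator $\overleftarrow{\mathcal{T}}$ on functions $v:\mathcal{S}\to\mathbb{R}$ defined by $$(\overleftarrow{\mathcal{T}}v)(s)=\lambda\gamma\,\overleftarrow{r}^\pi(s)+\lambda\gamma\sum_{s'}\overleftarrow{P}^\pi(s'\mid s)\,v(s')$$ is a contraction mapping (in the sup norm); hence repeatedly applying it converges to $\overleftarrow{v}^\pi$.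
   Context: Trajectories: $S_0\sim d_0$, $A_t\sim\pi(\cdot\mid S_t)$, $S_{t+1}\sim P(\cdot\mid S_t,A_t)$, $R_t=R(S_t,A_t)$. Let $\overrightarrow{P}^\pi(s'\mid s)=\sum_a\pi(a\mid s)P(s'\mid s,a)$. The backward transition kernel is $\overleftarrow{P}^\pi(s'\mid s)=d^\pi(s)^{-1}d^\pi(s')\overrightarrow{P}^\pi(s\mid s')$ (probability that the previous state was $s'$ given the current state $s$), and the backward reward is $\overleftarrow{r}^\pi(s)=\sum_{s',a'}P(s\mid s',a')d^\pi(s')\pi(a'\mid s')d^\pi(s)^{-1}R(s',a')$ (expected reward received upon entering $s$). *)

(* Defs.v *)
From HB Require Import structures.
From mathcomp Require Import all_boot all_order all_algebra.
From mathcomp Require Import all_classical all_reals all_analysis.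
Set Implicit Arguments. Unset Strict Implicit. Unset Printing Implicit Defensive.
Import Order.TTheory GRing.Theory Num.Theory.
Local Open Scope ring_scope.

Section MDP.
Variables (R : realType) (S A : finType).
(* P s a s' = P(s' | s, a); pi s a = pi(a | s); r s a = R(s,a). *)
Variables (P : S -> A -> S -> R) (pi : S -> A -> R) (r : S -> A -> R)
          (d0 : S -> R).

Definition is_distr (T : finType) (p : T -> R) :=
  (forall x, 0 <= p x) /\ \sum_x p x = 1.

Definition Pfwd (s s' : S) : R := \sum_a pi s a * P s a s'.

Fixpoint Pn (n : nat) (s s' : S) : R :=
  match n with
  | 0 => (s == s')%:R
  | n'.+1 => \sum_u Pn n' s u * Pfwd u s'
  end.

(* irreducible and aperiodic (period 1 at every state) *)
Definition irreducible := forall s s', exists n, 0 < Pn n s s'.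
Definition aperiodic := forall s (k : nat),
  (forall n, (0 < n)%N -> 0 < Pn n s s -> (k %| n)%N) -> k = 1%N.
Definition ergodic := irreducible /\ aperiodic.

Definition stationary (d : S -> R) :=
  is_distr d /\ forall s', \sum_s d s * Pfwd s s' = d s'.

(* probability of the trajectory prefix S_0,A_0,...,S_t,A_t *)
Definition traj_prob (t : nat) (ss : {ffun 'I_t.+1 -> S}) (aa : {ffun 'I_t.+1 -> A}) : R :=
  d0 (ss ord0) * (\prod_(k < t.+1) pi (ss k) (aa k)) *
  \prod_(k < t) P (ss (inord k)) (aa (inord k)) (ss (inord k.+1)).

Definition Gback (lam gam : R) (t : nat) (ss : {ffun 'I_t.+1 -> S}) (aa : {ffun 'I_t.+1 -> A}) : R :=
  \sum_(1 <= i < t.+1) (lam * gam) ^+ i * r (ss (inord (t - i))) (aa (inord (t - i))).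

Definition probSt (t : nat) (s : S) : R :=
  \sum_(ss : {ffun 'I_t.+1 -> S}) \sum_(aa : {ffun 'I_t.+1 -> A})
     (ss ord_max == s)%:R * traj_prob ss aa.

Definition EG (lam gam : R) (t : nat) (s : S) : R :=
  \sum_(ss : {ffun 'I_t.+1 -> S}) \sum_(aa : {ffun 'I_t.+1 -> A})
     (ss ord_max == s)%:R * Gback lam gam ss aa * traj_prob ss aa.

Definition cond_EG (lam gam : R) (t : nat) (s : S) : R := EG lam gam t s / probSt t s.

Definition Pback (d : S -> R) (s s' : S) : R := (d s)^-1 * d s' * Pfwd s' s.
Definition rback (d : S -> R) (s : S) : R :=
  \sum_s' \sum_a' P s' a' s * d s' * pi s' a' * (d s)^-1 * r s' a'.

Definition Tback (d : S -> R) (lam gam : R) (v : S -> R) : S -> R :=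
  fun s => lam * gam * rback d s + lam * gam * \sum_s' Pback d s s' * v s'.

End MDP.

Definition supnorm (R : realType) (S : finType) (v : S -> R) : R :=
  \big[Num.max/0]_s `|v s|.

(* Main.v *)
Require Import Defs.
From HB Require Import structures.
From mathcomp Require Import all_boot all_order all_algebra.
From mathcomp Require Import all_classical all_reals all_analysis.
From mathcomp Require Import zify ring lra.
Import Order.TTheory GRing.Theory Num.Theory numFieldNormedType.Exports.
Local Open Scope ring_scope.
Local Open Scope classical_set_scope.
Set Implicit Arguments. Unset Strict Implicit.
Section NT.
Variable G : nat -> Prop.
Hypothesis G0 : G 0.
Hypothesis Gadd : forall m n, G m -> G n -> G (m + n).
Hypothesis Gap : forall k, (forall n, (0 < n)%N -> G n -> (k %| n)%N) -> k = 1%N.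

Lemma GM k n : G n -> G (k * n).
Proof. move=> Gn; elim: k => [|k IH]; first by rewrite mul0n. by rewrite mulSn; apply: Gadd. Qed.

Lemma G_eventually : exists M, forall n, (M <= n)%N -> G n.
Proof.
pose L m := (0 < m)%N /\ exists q, G q /\ G (q + m).
have exL : exists m, `[< L m >].
  apply/not_existsP => H.
  have : 2%N = 1%N.
    apply: Gap => n n0 Gn; exfalso; apply: (H n); apply/asboolP.
    by split => //; exists 0%N; rewrite add0n.
  by [].
case: (ex_minnP exL) => g /asboolP [g0 [q [Gq Gqg]]] gmin.
have gdiv : forall n, (0 < n)%N -> G n -> (g %| n)%N.
  move=> n n0 Gn; rewrite /dvdn; apply/eqP.
  case: (posnP (n %% g)) => // rho0.
  have : (g <= n %% g)%N.
    apply: gmin; apply/asboolP; split => //.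
    exists ((n %/ g) * (q + g))%N; split; first exact: GM.
    have -> : ((n %/ g) * (q + g) + n %% g = (n %/ g) * q + n)%N.
      have E := div.divn_eq n g; move: E; move: (n %/ g)%N (n %% g)%N => a b E; nia.
    by apply: Gadd => //; apply: GM.
  by rewrite leqNgt ltn_pmod.
have g1 := Gap gdiv; subst g.
case: q Gq Gqg => [|q] Gq Gqg.
  exists 0%N => n _; rewrite -(muln1 n); apply: GM; by rewrite add0n in Gqg.
exists (q.+1 * q.+1)%N => n Hn.
have Hm : (q.+1 <= n %/ q.+1)%N by rewrite leq_divRL.
have Hr : (n %% q.+1 < q.+1)%N by rewrite ltn_pmod.
have -> : n = ((n %% q.+1) * (q.+1 + 1) + (n %/ q.+1 - n %% q.+1) * q.+1)%N.
  have E := div.divn_eq n q.+1; move: E Hm Hr; move: (n %% q.+1)%N (n %/ q.+1)%N => a b E Hm Hr; nia.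
by apply: Gadd; apply: GM.
Qed.
End NT.

Lemma uniform_eventually (I : finType) (Q : I -> nat -> Prop) :
  (forall i, exists M, forall n, (M <= n)%N -> Q i n) ->
  exists M, forall i n, (M <= n)%N -> Q i n.
Proof.
move=> H; have [f Hf] := choice H.
exists (\max_i f i) => i n Hn; apply: Hf; apply: leq_trans Hn; exact: leq_bigmax.
Qed.
Definition tends0 (R : realType) (e : nat -> R) :=
  forall eta, 0 < eta -> exists N, forall n, (N <= n)%N -> e n < eta.

Lemma tends0_cvg (R : realType) (x : nat -> R) (y : R) (e : nat -> R) :
  (forall n, `|x n - y| <= e n) -> tends0 e -> x n @[n --> \oo] --> y.
Proof.
move=> H He; apply/cvgrPdist_lt => eta eta0.
have [N HN] := He _ eta0.
exists N => // n /= Hn.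
by rewrite distrC; apply: le_lt_trans (H n) (HN n Hn).
Qed.

Lemma geo_tends0 (R : realType) (c K : R) : 0 <= c -> c < 1 ->
  tends0 (fun n => c ^+ n * K).
Proof.
move=> c0 c1 eta eta0.
case: (lerP K 0) => K0.
  exists 0%N => n _; apply: le_lt_trans eta0.
  by rewrite mulr_ge0_le0 // exprn_ge0.
have := @cvg_expr R c; rewrite ger0_norm // => /(_ c1).
move/cvgrPdist_lt => /(_ (eta / K)); rewrite divr_gt0 // => /(_ isT).
move=> [N _ HN]; exists N => n Hn.
have := HN n Hn; rewrite sub0r normrN ger0_norm ?exprn_ge0 //.
by rewrite ltr_pdivlMr.
Qed.

Lemma RL (R : realType) (e eps : nat -> R) (c : R) :
  (forall n, 0 <= e n) -> 0 <= c -> c < 1 -> tends0 eps ->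
  (forall n, e n.+1 <= c * e n + eps n) -> tends0 e.
Proof.
move=> e0 c0 c1 He H eta eta0.
have eta'0 : 0 < eta * (1 - c) / 2 by rewrite divr_gt0 // mulr_gt0 // subr_gt0.
have [N0 HN0] := He _ eta'0.
have Hk : forall k, e (N0 + k)%N - eta / 2 <= c ^+ k * e N0.
  elim=> [|k IH]; first by rewrite addn0 expr0 mul1r lerBlDr lerDl divr_ge0 // ltW.
  rewrite addnS exprS -mulrA.
  have h1 := H (N0 + k)%N.
  have h2 := HN0 (N0 + k)%N (leq_addr _ _).
  have h3 : c * (e (N0 + k)%N - eta / 2) <= c * (c ^+ k * e N0) by rewrite ler_wpM2l.
  nra.
have [k0 Hk0] := @geo_tends0 R c (e N0) c0 c1 (eta / 2) (divr_gt0 eta0 (ltr0Sn _ 1)).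
exists (N0 + k0)%N => n Hn.
have -> : n = (N0 + (n - N0))%N by rewrite subnKC // (leq_trans (leq_addr _ _) Hn).
have := Hk (n - N0)%N; have := Hk0 (n - N0)%N; rewrite leq_subRL ?Hn //; last first.
  exact: (leq_trans (leq_addr _ _) Hn).
move=> /(_ isT) => h1 h2; lra.
Qed.
Lemma cvg_sumS (R : realType) (I : finType) (u : I -> nat -> R) (l : I -> R) :
  (forall i, u i n @[n --> \oo] --> l i) ->
  (\sum_i u i n) @[n --> \oo] --> \sum_i l i.
Proof.
move=> H; apply: cvg_big => //; first exact: add_continuous.
Qed.

Lemma cvg_tends0 (R : realType) (u : nat -> R) : u n @[n --> \oo] --> 0 -> tends0 u.
Proof.
move/cvgrPdist_lt => H eta eta0; have [N _ HN] := H eta eta0.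
exists N => n Hn; have := HN n Hn; rewrite sub0r normrN => h.
by apply: le_lt_trans h; apply: ler_norm.
Qed.

Section MC.
Variables (R : realType) (S A : finType).
Variables (P : S -> A -> S -> R) (pi : S -> A -> R).
Hypothesis HP : forall s a, is_distr (P s a).
Hypothesis Hpi : forall s, is_distr (pi s).

Lemma Pfwd_ge0 s x : 0 <= Pfwd P pi s x.
Proof. apply: sumr_ge0 => a _; apply: mulr_ge0; [exact: (Hpi s).1 | exact: (HP s a).1]. Qed.

Lemma Pfwd_sum1 s : \sum_x Pfwd P pi s x = 1.
Proof.
rewrite /Pfwd exchange_big /= -(Hpi s).2; apply: eq_bigr => a _.
by rewrite -mulr_sumr (HP s a).2 mulr1.
Qed.

Lemma Pn_ge0 n s x : 0 <= Pn P pi n s x.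
Proof.
elim: n x => [|n IH] x /=; first by rewrite ler0n.
by apply: sumr_ge0 => u _; apply: mulr_ge0 => //; apply: Pfwd_ge0.
Qed.

Lemma Pn_sum1 n s : \sum_x Pn P pi n s x = 1.
Proof.
elim: n => [|n IH] /=.
  by rewrite (bigD1 s) //= eqxx big1 ?addr0 // => x /negPf; rewrite eq_sym => ->.
rewrite exchange_big /= -IH; apply: eq_bigr => u _.
by rewrite -mulr_sumr Pfwd_sum1 mulr1.
Qed.

Lemma Pn_add m n s x : Pn P pi (m + n) s x = \sum_u Pn P pi m s u * Pn P pi n u x.
Proof.
elim: n x => [|n IH] x /=.
  rewrite addn0 (bigD1 x) //= eqxx mulr1 big1 ?addr0 // => u /negPf.
  by rewrite eq_sym => ->; rewrite mulr0.
rewrite addnS /=.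
under eq_bigr do rewrite IH mulr_suml.
rewrite exchange_big /=; apply: eq_bigr => u _.
by rewrite mulr_sumr; apply: eq_bigr => v _; rewrite mulrA.
Qed.

Lemma Pn_ge_term m n s u x :
  Pn P pi m s u * Pn P pi n u x <= Pn P pi (m + n) s x.
Proof.
rewrite Pn_add (bigD1 u) //= lerDl; apply: sumr_ge0 => v _.
by apply: mulr_ge0; apply: Pn_ge0.
Qed.

Lemma stat_Pn (d : S -> R) : stationary P pi d ->
  forall n x, d x = \sum_s d s * Pn P pi n s x.
Proof.
move=> [_ Hd] n; elim: n => [|n IH] x /=.
  rewrite (bigD1 x) //= eqxx mulr1 big1 ?addr0 // => u /negPf.
  by rewrite eq_sym => ->; rewrite mulr0.
rewrite -Hd; symmetry; under eq_bigr do rewrite mulr_sumr.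
rewrite exchange_big /=; apply: eq_bigr => u _.
by rewrite (IH u) mulr_suml; apply: eq_bigr => v _; rewrite mulrA.
Qed.

Lemma Pn_eventually_pos : ergodic P pi -> exists N, forall s x, 0 < Pn P pi N s x.
Proof.
move=> [Hirr Hap].
have H1 : forall s, exists M, forall n, (M <= n)%N -> 0 < Pn P pi n s s.
  move=> s; apply: (@G_eventually (fun n => 0 < Pn P pi n s s)).
  - by rewrite /= eqxx ltr01.
  - move=> m n Hm Hn; apply: lt_le_trans (Pn_ge_term m n s s s).
    exact: mulr_gt0.
  - move=> k Hk; exact: Hap Hk.
have H2 : forall p : S * S, exists M, forall n, (M <= n)%N -> 0 < Pn P pi n p.1 p.2.
  move=> [s x] /=; have [M HM] := H1 s; have [n0 Hn0] := Hirr s x.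
  exists (M + n0)%N => n Hn.
  have -> : n = (n - n0 + n0)%N by rewrite subnK // (leq_trans (leq_addl _ _) Hn).
  apply: lt_le_trans (Pn_ge_term _ _ s s x); apply: mulr_gt0 => //.
  by apply: HM; rewrite leq_subRL ?(leq_trans (leq_addl _ _) Hn) // addnC.
have [N HN] := uniform_eventually H2.
by exists N => s x; apply: (HN (s, x)).
Qed.

Lemma d_pos (d : S -> R) : irreducible P pi -> stationary P pi d -> forall x, 0 < d x.
Proof.
move=> Hirr Hst x.
have [[d0 d1] _] := Hst.
have [s0 Hs0] : exists s0, 0 < d s0.
  apply/not_existsP => H.
  have : \sum_s d s <= 0.
    apply: sumr_le0 => s _; rewrite leNgt; apply/negP => h; exact: (H s).
  by rewrite d1 ler10.
have [n Hn] := Hirr s0 x.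
rewrite (stat_Pn Hst n x) (bigD1 s0) //=.
apply: lt_le_trans (mulr_gt0 Hs0 Hn) _; rewrite lerDl.
by apply: sumr_ge0 => s _; apply: mulr_ge0 => //; apply: Pn_ge0.
Qed.

Lemma doeblin (Q : S -> S -> R) (eps : R) (del : S -> R) :
  (forall s x, eps <= Q s x) -> (forall s, \sum_x Q s x = 1) -> \sum_s del s = 0 ->
  \sum_x `|\sum_s del s * Q s x| <= (1 - eps * #|S|%:R) * \sum_s `|del s|.
Proof.
move=> HQ HQ1 Hdel.
have E : forall x, \sum_s del s * Q s x = \sum_s del s * (Q s x - eps).
  move=> x; under [RHS]eq_bigr do rewrite mulrBr.
  by rewrite sumrB -mulr_suml Hdel mul0r subr0.
under eq_bigr do rewrite E.
apply: le_trans (_ : \sum_x \sum_s `|del s| * (Q s x - eps) <= _).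
  apply: ler_sum => x _; apply: le_trans (ler_norm_sum _ _ _) _.
  by apply: ler_sum => s _; rewrite normrM (ger0_norm (x := Q s x - eps)) ?subr_ge0 ?HQ.
rewrite exchange_big /= mulr_sumr; apply: ler_sum => s _.
by rewrite -mulr_sumr sumrB HQ1 sumr_const mulrC mulr_natr.
Qed.

Lemma exists_pos (d : S -> R) : is_distr d -> exists s0, 0 < d s0.
Proof.
move=> [d0 d1]; apply/not_existsP => H.
have : \sum_s d s <= 0.
  apply: sumr_le0 => s _; rewrite leNgt; apply/negP => h; exact: (H s).
by rewrite d1 ler10.
Qed.

Variable d0 : S -> R.
Hypothesis Hd0 : is_distr d0.

Fixpoint mu (t : nat) (x : S) : R :=
  if t is t'.+1 then \sum_s mu t' s * Pfwd P pi s x else d0 x.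

Lemma mu_add t n x : mu (t + n) x = \sum_s mu t s * Pn P pi n s x.
Proof.
elim: n x => [|n IH] x /=.
  rewrite addn0 (bigD1 x) //= eqxx mulr1 big1 ?addr0 // => u /negPf.
  by rewrite eq_sym => ->; rewrite mulr0.
rewrite addnS /=; symmetry; under eq_bigr do rewrite mulr_sumr.
rewrite exchange_big /=; apply: eq_bigr => u _.
by rewrite (IH u) mulr_suml; apply: eq_bigr => v _; rewrite mulrA.
Qed.

Lemma mu_ge0 t x : 0 <= mu t x.
Proof.
elim: t x => [|t IH] x /=; first exact: Hd0.1.
by apply: sumr_ge0 => s _; apply: mulr_ge0 => //; apply: Pfwd_ge0.
Qed.

Lemma mu_sum1 t : \sum_x mu t x = 1.
Proof.
elim: t => [|t IH] /=; first exact: Hd0.2.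
rewrite exchange_big /= -IH; apply: eq_bigr => u _.
by rewrite -mulr_sumr Pfwd_sum1 mulr1.
Qed.

Variable d : S -> R.
Hypothesis Hst : stationary P pi d.

Definition D t := \sum_x `|mu t x - d x|.

Lemma D_step t n eps : (forall s x, eps <= Pn P pi n s x) ->
  D (t + n) <= (1 - eps * #|S|%:R) * D t.
Proof.
move=> He; rewrite /D.
have E : forall x, mu (t + n) x - d x = \sum_s (mu t s - d s) * Pn P pi n s x.
  move=> x; rewrite mu_add (stat_Pn Hst n x) -sumrB; apply: eq_bigr => s _.
  by rewrite mulrBl.
under eq_bigr do rewrite E.
apply: doeblin => //; first by move=> s; apply: Pn_sum1.
by rewrite sumrB mu_sum1 Hst.1.2 subrr.
Qed.

Lemma D_mono n j : D (n + j) <= D n.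
Proof.
elim: j => [|j IH]; first by rewrite addn0.
apply: le_trans IH; rewrite addnS -addn1.
have := @D_step (n + j) 1 0; rewrite mul0r subr0 mul1r; apply.
by move=> s x; apply: Pn_ge0.
Qed.

Lemma D_ge0 t : 0 <= D t.
Proof. by apply: sumr_ge0 => x _. Qed.

Lemma D_tends0 : ergodic P pi -> tends0 D.
Proof.
move=> Herg.
have [N HN] := Pn_eventually_pos Herg.
pose eps := \big[Order.min/1]_(p : S * S) Pn P pi N p.1 p.2.
have eps0 : 0 < eps by apply: lt_bigmin => // p _; apply: HN.
have epsle : forall s x, eps <= Pn P pi N s x.
  by move=> s x; apply: (bigmin_le _ (s, x)).
have [s0 _] := exists_pos Hst.1.
have rho0 : 0 <= 1 - eps * #|S|%:R.
  have h : eps * #|S|%:R <= \sum_x Pn P pi N s0 x.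
    rewrite mulr_natr -sumr_const; apply: ler_sum => x _; exact: epsle.
  by rewrite subr_ge0; move: h; rewrite Pn_sum1.
have rho1 : 1 - eps * #|S|%:R < 1.
  rewrite ltrBlDr ltrDl mulr_gt0 // ltr0n; apply/card_gt0P; by exists s0.
have He : tends0 (fun k => D (k * N)).
  apply: (RL (c := 1 - eps * #|S|%:R) (eps := fun _ => 0)) => //.
  - by move=> n; apply: D_ge0.
  - by move=> eta eta0; exists 0%N.
  - by move=> k; rewrite addr0 mulSn addnC; apply: D_step.
move=> eta eta0; have [K HK] := He eta eta0.
exists (K * N)%N => n Hn.
have -> : n = (K * N + (n - K * N))%N by rewrite subnKC.
by apply: le_lt_trans (D_mono _ _) (HK K (leqnn _)).
Qed.

Section FF.
Variable T : finType.
Variable t : nat.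

Definition ext (f : {ffun 'I_t.+1 -> T}) (x : T) : {ffun 'I_t.+2 -> T} :=
  [ffun i : 'I_t.+2 => if (i < t.+1)%N then f (inord i) else x].
Definition res (g : {ffun 'I_t.+2 -> T}) : {ffun 'I_t.+1 -> T} :=
  [ffun i : 'I_t.+1 => g (inord i)].

Lemma ext_lt f x (i : nat) : (i < t.+1)%N -> ext f x (inord i) = f (inord i).
Proof. by move=> Hi; rewrite ffunE inordK ?Hi // (leq_trans Hi). Qed.

Lemma ext_max f x : ext f x ord_max = x.
Proof. by rewrite ffunE /= ltnn. Qed.

Lemma ext_inord_max f x : ext f x (inord t.+1) = x.
Proof. by rewrite ffunE inordK // ltnn. Qed.

Lemma ext_widen f x (i : 'I_t.+1) : ext f x (widen_ord (leqnSn _) i) = f i.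
Proof. by rewrite ffunE /= ltn_ord inord_val. Qed.

Lemma ext_ord0 f x : ext f x ord0 = f ord0.
Proof. by rewrite ffunE /=; congr (f _); apply: val_inj; rewrite /= inordK. Qed.

Lemma big_ffunS (F : {ffun 'I_t.+2 -> T} -> R) :
  \sum_(g : {ffun 'I_t.+2 -> T}) F g =
  \sum_(f : {ffun 'I_t.+1 -> T}) \sum_(x : T) F (ext f x).
Proof.
rewrite pair_big /= (reindex (fun p : {ffun 'I_t.+1 -> T} * T => ext p.1 p.2)) //.
apply: onW_bij; exists (fun g => (res g, g ord_max)).
  move=> [f x] /=; rewrite ext_max; congr pair; apply/ffunP => i.
  by rewrite ffunE ext_lt // inord_val.
move=> g; apply/ffunP => i; rewrite ffunE.
case: ifP => Hi; last first.
  have -> // : i = ord_max by apply: val_inj => /=; apply/eqP; rewrite eqn_leq -ltnS ltn_ord leqNgt Hi.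
by rewrite ffunE; congr (g _); apply: val_inj; rewrite /= !inordK // (leq_trans Hi).
Qed.
End FF.

Lemma big_ffun1 (T : finType) (F : {ffun 'I_1 -> T} -> R) :
  \sum_(f : {ffun 'I_1 -> T}) F f = \sum_(x : T) F [ffun => x].
Proof.
rewrite (reindex (fun x : T => [ffun => x])) //.
apply: onW_bij; exists (fun f : {ffun 'I_1 -> T} => f ord0); first by move=> x; rewrite ffunE.
by move=> f; apply/ffunP => i; rewrite !ffunE (ord1 i).
Qed.

Lemma traj0 s a : traj_prob P pi d0 ([ffun=> s] : {ffun 'I_1 -> S}) ([ffun=> a] : {ffun 'I_1 -> A}) = d0 s * pi s a.
Proof. by rewrite /traj_prob big_ord1 big_ord0 !ffunE mulr1. Qed.

Lemma trajS t (ss : {ffun 'I_t.+1 -> S}) (aa : {ffun 'I_t.+1 -> A}) x y :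
  traj_prob P pi d0 (ext ss x) (ext aa y) =
  traj_prob P pi d0 ss aa * (P (ss ord_max) (aa ord_max) x * pi x y).
Proof.
have hpi : \prod_(k < t.+2) pi (ext ss x k) (ext aa y k) =
    (\prod_(k < t.+1) pi (ss k) (aa k)) * pi x y.
  rewrite big_ord_recr /= !ext_max; congr (_ * _).
  by apply: eq_bigr => i _; rewrite !ext_widen.
have hP : \prod_(k < t.+1) P (ext ss x (inord k)) (ext aa y (inord k)) (ext ss x (inord k.+1)) =
    (\prod_(k < t) P (ss (inord k)) (aa (inord k)) (ss (inord k.+1))) * P (ss ord_max) (aa ord_max) x.
  rewrite big_ord_recr /=; congr (_ * _).
    by apply: eq_bigr => i _; rewrite !ext_lt ?ltnS ?ltn_ord ?(ltnW (ltn_ord i)).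
  rewrite ext_inord_max !ext_lt //.
  by have -> : (inord t : 'I_t.+1) = ord_max by apply: val_inj; rewrite /= inordK.
rewrite /traj_prob (ext_ord0 ss x) hpi hP; ring.
Qed.

Variables (r : S -> A -> R) (lam gam : R).

Lemma Gback0 (ss : {ffun 'I_1 -> S}) (aa : {ffun 'I_1 -> A}) : Gback r lam gam ss aa = 0.
Proof. by rewrite /Gback big_geq. Qed.

Lemma GbackS t (ss : {ffun 'I_t.+1 -> S}) (aa : {ffun 'I_t.+1 -> A}) x y :
  Gback r lam gam (ext ss x) (ext aa y) =
  lam * gam * (r (ss ord_max) (aa ord_max) + Gback r lam gam ss aa).
Proof.
rewrite /Gback big_ltn // big_add1 /= subn1 /= expr1 !ext_lt //.
have -> : (inord t : 'I_t.+1) = ord_max by apply: val_inj; rewrite /= inordK.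
rewrite mulrDr mulr_sumr; congr (_ + _); apply: eq_bigr => i _.
by rewrite subSS !ext_lt ?ltnS ?leq_subr // exprS mulrA.
Qed.

Definition W t (phi : S -> A -> R) :=
  \sum_(ss : {ffun 'I_t.+1 -> S}) \sum_(aa : {ffun 'I_t.+1 -> A})
     phi (ss ord_max) (aa ord_max) * traj_prob P pi d0 ss aa.
Definition V t (phi : S -> A -> R) :=
  \sum_(ss : {ffun 'I_t.+1 -> S}) \sum_(aa : {ffun 'I_t.+1 -> A})
     phi (ss ord_max) (aa ord_max) * Gback r lam gam ss aa * traj_prob P pi d0 ss aa.
Definition Psi (phi : S -> A -> R) s a := \sum_x P s a x * \sum_y pi x y * phi x y.

Lemma sum2_lin s a c phi :
  \sum_x \sum_y phi x y * c * (P s a x * pi x y) = c * Psi phi s a.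
Proof.
rewrite /Psi mulr_sumr; apply: eq_bigr => x _.
rewrite !mulr_sumr; apply: eq_bigr => y _; ring.
Qed.

Lemma W_S t phi : W t.+1 phi = W t (Psi phi).
Proof.
rewrite /W big_ffunS.
under eq_bigr => f _ do under eq_bigr => x _ do rewrite big_ffunS.
under eq_bigr => f _ do rewrite exchange_big.
apply: eq_bigr => f _; apply: eq_bigr => g _.
rewrite mulrC -sum2_lin; apply: eq_bigr => x _; apply: eq_bigr => y _.
by rewrite !ext_max trajS mulrA.
Qed.

Lemma V_S t phi : V t.+1 phi =
  W t (fun s a => lam * gam * r s a * Psi phi s a) + V t (fun s a => lam * gam * Psi phi s a).
Proof.
rewrite /W /V -big_split /=; under [RHS]eq_bigr do rewrite -big_split /=.
rewrite big_ffunS.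
under [LHS]eq_bigr => f _ do under eq_bigr => x _ do rewrite big_ffunS.
under [LHS]eq_bigr => f _ do rewrite exchange_big.
apply: eq_bigr => f _; apply: eq_bigr => g _.
transitivity (\sum_x \sum_y phi x y * (lam * gam * (r (f ord_max) (g ord_max) + Gback r lam gam f g) * traj_prob P pi d0 f g) * (P (f ord_max) (g ord_max) x * pi x y)).
  apply: eq_bigr => x _; apply: eq_bigr => y _.
  by rewrite !ext_max GbackS trajS; ring.
rewrite sum2_lin; ring.
Qed.

Lemma L_gen (m : S -> R) (c : S -> A -> R) phi :
  \sum_s m s * \sum_a pi s a * (c s a * Psi phi s a) =
  \sum_x (\sum_s \sum_a P s a x * m s * pi s a * c s a) * \sum_y pi x y * phi x y.
Proof.
under [RHS]eq_bigr do rewrite mulr_suml.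
rewrite exchange_big /=; apply: eq_bigr => s _.
under [RHS]eq_bigr do rewrite mulr_suml.
rewrite exchange_big /= mulr_sumr; apply: eq_bigr => a _.
rewrite /Psi !mulr_sumr; apply: eq_bigr => x _; ring.
Qed.

Lemma W_eq t phi : W t phi = \sum_s mu t s * \sum_a pi s a * phi s a.
Proof.
elim: t phi => [|t IH] phi.
  rewrite /W big_ffun1; apply: eq_bigr => s _.
  rewrite big_ffun1 mulr_sumr; apply: eq_bigr => a _.
  rewrite traj0 !ffunE /=; ring.
rewrite W_S IH.
have := L_gen (mu t) (fun _ _ => 1) phi.
under eq_bigr do under eq_bigr do rewrite mul1r.
move=> ->; apply: eq_bigr => x _; congr (_ * _) => /=.
apply: eq_bigr => s _; rewrite /Pfwd mulr_sumr; apply: eq_bigr => a _; ring.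
Qed.

Fixpoint Eb t x : R :=
  if t is t'.+1 then
    lam * gam * (\sum_s \sum_a P s a x * mu t' s * pi s a * r s a + \sum_s Eb t' s * Pfwd P pi s x)
  else 0.

Lemma V_eq t phi : V t phi = \sum_s Eb t s * \sum_a pi s a * phi s a.
Proof.
elim: t phi => [|t IH] phi.
  rewrite /V big1 /=; last by move=> ss _; rewrite big1 // => aa _; rewrite Gback0 mulr0 mul0r.
  by rewrite big1 // => s _; rewrite mul0r.
rewrite V_S IH W_eq.
have h1 := L_gen (mu t) (fun s a => lam * gam * r s a) phi; simpl in h1; rewrite h1.
have h2 := L_gen (Eb t) (fun s a => lam * gam) phi; simpl in h2; rewrite h2.
rewrite -big_split /=; apply: eq_bigr => x _.
have e1 : \sum_s \sum_a P s a x * mu t s * pi s a * (lam * gam * r s a) =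
   lam * gam * \sum_s \sum_a P s a x * mu t s * pi s a * r s a.
  rewrite mulr_sumr; apply: eq_bigr => s _; rewrite mulr_sumr; apply: eq_bigr => a _; ring.
have e2 : \sum_s \sum_a P s a x * Eb t s * pi s a * (lam * gam) =
   lam * gam * \sum_s Eb t s * Pfwd P pi s x.
  rewrite mulr_sumr; apply: eq_bigr => s _; rewrite /Pfwd !mulr_sumr; apply: eq_bigr => a _; ring.
rewrite e1 e2 /=; ring.
Qed.

Lemma sum_indic (m : S -> R) s : \sum_s' m s' * \sum_a pi s' a * (s' == s)%:R = m s.
Proof.
under eq_bigr do rewrite -mulr_suml (Hpi _).2 mul1r.
rewrite (bigD1 s) //= eqxx mulr1 big1 ?addr0 // => s' /negPf ->; by rewrite mulr0.
Qed.

Lemma probSt_eq t s : probSt P pi d0 t s = mu t s.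
Proof.
have -> : probSt P pi d0 t s = W t (fun s' _ => (s' == s)%:R) by [].
by rewrite W_eq sum_indic.
Qed.

Lemma EG_eq t s : EG P pi r d0 lam gam t s = Eb t s.
Proof.
have -> : EG P pi r d0 lam gam t s = V t (fun s' _ => (s' == s)%:R) by [].
by rewrite V_eq sum_indic.
Qed.

Lemma le_supnorm (v : S -> R) s : `|v s| <= supnorm v.
Proof. exact: (le_bigmax _ (fun s => `|v s|) s). Qed.

Lemma supnorm_le (v : S -> R) K : 0 <= K -> (forall s, `|v s| <= K) -> supnorm v <= K.
Proof. by move=> K0 H; apply: bigmax_le => // s _; apply: H. Qed.

Lemma supnorm_ge0 (v : S -> R) : 0 <= supnorm v.
Proof.
rewrite /supnorm; apply: (big_ind (fun x => 0 <= x)) => // x y hx hy.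
by rewrite le_max hx.
Qed.

Lemma supnorm_ext (v w : S -> R) : (forall s, v s = w s) -> supnorm v = supnorm w.
Proof. by move=> H; rewrite /supnorm; apply: eq_bigr => s _; rewrite H. Qed.

Hypothesis Herg : ergodic P pi.
Hypotheses (gam0 : 0 <= gam) (gam1 : gam < 1) (lam0 : 0 <= lam) (lam1 : lam <= 1).

Let c := lam * gam.
Let c0 : 0 <= c. Proof. exact: mulr_ge0. Qed.
Let c1 : c < 1.
Proof. apply: le_lt_trans gam1; rewrite /c -[X in _ <= X]mul1r; exact: ler_wpM2r. Qed.

Let dpos : forall x, 0 < d x := d_pos Herg.1 Hst.

Let T := Tback P pi r d lam gam.

Lemma Pback_ge0 s s' : 0 <= Pback P pi d s s'.
Proof.
rewrite /Pback; apply: mulr_ge0; last exact: Pfwd_ge0.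
by apply: mulr_ge0; [rewrite invr_ge0 ltW | apply: ltW].
Qed.

Lemma Pback_sum s : \sum_s' Pback P pi d s s' = 1.
Proof.
rewrite /Pback; under eq_bigr do rewrite -mulrA.
by rewrite -mulr_sumr Hst.2 mulVf // lt0r_neq0.
Qed.

Lemma T_lip v w s : `|T v s - T w s| <= c * supnorm (fun s => v s - w s).
Proof.
have -> : T v s - T w s = c * \sum_s' Pback P pi d s s' * (v s' - w s').
  have e : \sum_s' Pback P pi d s s' * (v s' - w s') =
      \sum_s' Pback P pi d s s' * v s' - \sum_s' Pback P pi d s s' * w s'.
    by rewrite -sumrB; apply: eq_bigr => s' _; rewrite mulrBr.
  rewrite e /T /Tback /c; ring.
rewrite normrM ger0_norm //; apply: ler_wpM2l => //.
apply: le_trans (ler_norm_sum _ _ _) _.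
apply: le_trans (_ : \sum_s' Pback P pi d s s' * supnorm (fun s => v s - w s) <= _).
  apply: ler_sum => s' _; rewrite normrM ger0_norm ?Pback_ge0 //.
  by apply: ler_wpM2l; [apply: Pback_ge0 | apply: (le_supnorm (fun s => v s - w s))].
by rewrite -mulr_suml Pback_sum mul1r.
Qed.

Lemma T_contr v w : supnorm (fun s => T v s - T w s) <= c * supnorm (fun s => v s - w s).
Proof. by apply: supnorm_le => //; [apply: mulr_ge0 => //; apply: supnorm_ge0 | apply: T_lip]. Qed.

Let xi n := iter n T (fun _ => 0).
Let K := supnorm (fun s => T (fun _ => 0) s).
Let B := K / (1 - c).
Let c1' : 0 < 1 - c. Proof. by rewrite subr_gt0. Qed.
Let K0 : 0 <= K. Proof. exact: supnorm_ge0. Qed.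
Let B0 : 0 <= B. Proof. by rewrite /B divr_ge0 // ltW. Qed.
Let hB : (1 - c) * B = K. Proof. by rewrite /B mulrC -mulrA mulVf ?mulr1 // lt0r_neq0. Qed.

Lemma x_step n : supnorm (fun s => xi n.+1 s - xi n s) <= c ^+ n * K.
Proof.
elim: n => [|n IH].
  rewrite expr0 mul1r (@supnorm_ext _ (fun s => T (fun _ => 0) s)) // => s.
  by rewrite /= subr0.
apply: le_trans (T_contr (xi n.+1) (xi n)) _.
by rewrite exprS -mulrA; apply: ler_wpM2l.
Qed.

Lemma x_bound n : supnorm (xi n) <= B.
Proof.
elim: n => [|n IH].
  by apply: supnorm_le => // s; rewrite /= normr0.
apply: supnorm_le => // s.
have h1 : `|xi n.+1 s| <= `|T (xi n) s - T (fun _ => 0) s| + `|T (fun _ => 0) s|.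
  by rewrite -[X in `|X| <= _](subrK (T (fun _ => 0) s)); apply: ler_normD.
have h2 := T_lip (xi n) (fun _ => 0) s.
rewrite (@supnorm_ext _ (xi n)) in h2; last by move=> s'; rewrite subr0.
have h3 := le_supnorm (fun s => T (fun _ => 0) s) s.
have h4 : c * supnorm (xi n) <= c * B by apply: ler_wpM2l.
rewrite -/K in h3.
have h5 := hB; apply: le_trans h1 _; lra.
Qed.

Let y s n := xi n s + c ^+ n * B.

Lemma y_noninc s : nonincreasing_seq (y s).
Proof.
apply/nonincreasing_seqP => n; rewrite /y.
have h : xi n.+1 s - xi n s <= c ^+ n * K.
  apply: le_trans (ler_norm _) _; apply: le_trans (x_step n).
  exact: (le_supnorm (fun s => xi n.+1 s - xi n s)).
rewrite -hB in h.
have e1 : c ^+ n * ((1 - c) * B) = c ^+ n * B - c * (c ^+ n * B) by ring.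
rewrite exprS -mulrA; lra.
Qed.

Let vb s := inf (y s @` setT).

Lemma x_cvg s : xi n s @[n --> \oo] --> vb s.
Proof.
have Hy : y s n @[n --> \oo] --> vb s.
  apply: nonincreasing_cvgn; first exact: y_noninc.
  exists (- B) => _ [n _ <-]; rewrite /y.
  have h1 := le_supnorm (xi n) s; have h2 := x_bound n.
  have h3 : 0 <= c ^+ n * B by rewrite mulr_ge0 // exprn_ge0.
  have h4 := ler_norm (- xi n s); rewrite normrN in h4. lra.
have Hg : c ^+ n * B @[n --> \oo] --> 0.
  apply: (@tends0_cvg R (fun n => c ^+ n * B) 0 (fun n => c ^+ n * B)); last exact: geo_tends0 c0 c1.
  by move=> n; rewrite subr0 ger0_norm // mulr_ge0 // exprn_ge0.
have := cvgB Hy Hg; rewrite subr0.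
have -> : (fun n => xi n s) = (y s - (fun n => c ^+ n * B)) by apply/funext => n; rewrite /= /y addrK.
by apply.
Qed.

Lemma vb_fix s : T vb s = vb s.
Proof.
have H1 : xi n.+1 s @[n --> \oo] --> vb s.
  by rewrite (cvg_shiftS (fun n => xi n s)); apply: x_cvg.
have H2 : xi n.+1 s @[n --> \oo] --> T vb s.
  rewrite /= /T /Tback; apply: cvgD; first exact: cvg_cst.
  apply: cvgMl_tmp; apply: cvg_sumS => s'; apply: cvgMl_tmp; exact: x_cvg.
exact: (cvg_unique (@norm_hausdorff _ R^o) H2 H1).
Qed.

Lemma iter_cvg v0 s : iter n T v0 s @[n --> \oo] --> vb s.
Proof.
have Hb : forall n, supnorm (fun s => iter n T v0 s - vb s) <= c ^+ n * supnorm (fun s => v0 s - vb s).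
  elim=> [|n IH]; first by rewrite expr0 mul1r.
  rewrite (@supnorm_ext _ (fun s => T (iter n T v0) s - T vb s)); last first.
    by move=> s'; rewrite vb_fix.
  apply: le_trans (T_contr _ _) _.
  by rewrite exprS -mulrA; apply: ler_wpM2l.
apply: (@tends0_cvg R (fun n => iter n T v0 s) (vb s) (fun n => c ^+ n * supnorm (fun s => v0 s - vb s))).
  move=> n; apply: le_trans (Hb n).
  exact: (le_supnorm (fun s => iter n T v0 s - vb s)).
exact: geo_tends0 c0 c1.
Qed.

Let bt t x := \sum_s \sum_a P s a x * mu t s * pi s a * r s a.
Let bd x := \sum_s \sum_a P s a x * d s * pi s a * r s a.
Let Est x := d x * vb x.

Lemma Est_fix x : Est x = c * (bd x + \sum_s Est s * Pfwd P pi s x).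
Proof.
have dx0 : d x != 0 by rewrite lt0r_neq0.
have e1 : d x * rback P pi r d x = bd x.
  rewrite /rback /bd mulr_sumr; apply: eq_bigr => s _.
  rewrite mulr_sumr; apply: eq_bigr => a _; field; exact: dx0.
have e2 : d x * \sum_s' Pback P pi d x s' * vb s' = \sum_s Est s * Pfwd P pi s x.
  rewrite /Pback mulr_sumr; apply: eq_bigr => s1 _; rewrite /Est; field; exact: dx0.
rewrite /Est -{1}vb_fix /T /Tback -e1 -e2 /c; ring.
Qed.

Lemma mu_cvg s : mu n s @[n --> \oo] --> d s.
Proof.
apply: (@tends0_cvg R (fun n => mu n s) (d s) D); last exact: D_tends0.
move=> n; rewrite /D (bigD1 s) //= lerDl; exact: sumr_ge0.
Qed.

Lemma bt_cvg x : bt n x @[n --> \oo] --> bd x.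
Proof.
rewrite /bt /bd; apply: cvg_sumS => s; apply: cvg_sumS => a.
apply: cvgMr_tmp; apply: cvgMr_tmp; apply: cvgMl_tmp; exact: mu_cvg.
Qed.

Let eps n := c * \sum_x `|bt n x - bd x|.

Lemma eps_tends0 : tends0 eps.
Proof.
have L0 : \sum_x `|bt n x - bd x| @[n --> \oo] --> \sum_x `|bd x - bd x|.
  apply: cvg_sumS => x; apply: cvg_norm; apply: cvgB; [exact: bt_cvg | exact: cvg_cst].
rewrite (_ : \sum_x `|bd x - bd x| = 0) in L0; last first.
  by rewrite big1 // => x _; rewrite subrr normr0.
have := cvgMl_tmp (a := c) L0; rewrite mulr0 => L1.
by apply: cvg_tends0; exact: L1.
Qed.

Let e t := \sum_x `|Eb t x - Est x|.

Lemma e_rec t : e t.+1 <= c * e t + eps t.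
Proof.
have E : forall x, Eb t.+1 x - Est x =
    c * (bt t x - bd x) + c * \sum_s (Eb t s - Est s) * Pfwd P pi s x.
  move=> x; rewrite Est_fix /=.
  have -> : \sum_s (Eb t s - Est s) * Pfwd P pi s x =
      \sum_s Eb t s * Pfwd P pi s x - \sum_s Est s * Pfwd P pi s x.
    by rewrite -sumrB; apply: eq_bigr => s _; rewrite mulrBl.
  rewrite /bt /c; ring.
rewrite /e /eps addrC.
under eq_bigr do rewrite E.
apply: le_trans (_ : \sum_x (c * `|bt t x - bd x| + c * \sum_s `|Eb t s - Est s| * Pfwd P pi s x) <= _).
  apply: ler_sum => x _; apply: le_trans (ler_normD _ _) _.
  rewrite (normrM c) (normrM c) (ger0_norm c0); apply: lerD => //; apply: ler_wpM2l => //.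
  apply: le_trans (ler_norm_sum _ _ _) _; apply: ler_sum => s _.
  by rewrite normrM (ger0_norm (Pfwd_ge0 _ _)).
rewrite big_split /= -!mulr_sumr; apply: lerD => //; apply: ler_wpM2l => //.
rewrite exchange_big /= (eq_bigr (fun s => `|Eb t s - Est s|)) // => s _.
by rewrite -mulr_sumr Pfwd_sum1 mulr1.
Qed.

Lemma Eb_cvg x : Eb n x @[n --> \oo] --> Est x.
Proof.
apply: (@tends0_cvg R (fun n => Eb n x) (Est x) e).
  move=> n; rewrite /e (bigD1 x) //= lerDl; exact: sumr_ge0.
apply: (@RL R e eps c) => //.
- by move=> n; apply: sumr_ge0.
- exact: eps_tends0.
- exact: e_rec.
Qed.

Lemma condEG_cvg s : cond_EG P pi r d0 lam gam t s @[t --> \oo] --> vb s.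
Proof.
have ds0 : d s != 0 by rewrite lt0r_neq0.
have H := cvgM (Eb_cvg (x:=s)) (cvgV ds0 (mu_cvg (s:=s))).
have -> : vb s = Est s * (d s)^-1 by rewrite /Est mulrAC divff // mul1r.
have -> : (fun t => cond_EG P pi r d0 lam gam t s) = (fun t => Eb t s * (mu t s)^-1).
  by apply/funext => t; rewrite /cond_EG EG_eq probSt_eq.
exact: H.
Qed.

Lemma main_thm : exists vb : S -> R,
    (forall s, cond_EG P pi r d0 lam gam t s @[t --> \oo] --> vb s) /\
    (exists c : R, 0 <= c /\ c < 1 /\
       forall v w : S -> R,
         supnorm (fun s => Tback P pi r d lam gam v s - Tback P pi r d lam gam w s)
         <= c * supnorm (fun s => v s - w s)) /\
    (forall (v0 : S -> R) (s : S),
       iter n (Tback P pi r d lam gam) v0 s @[n --> \oo] --> vb s).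
Proof.
exists vb; split; first exact: condEG_cvg.
split; last exact: iter_cvg.
exists c; split; first exact: c0.
split; first exact: c1.
exact: T_contr.
Qed.
End MC.

Unset Implicit Arguments. Set Strict Implicit.

Theorem theorem4p3 (R : realType) (S A : finType)
  (P : S -> A -> S -> R) (pi : S -> A -> R) (r : S -> A -> R) (d0 : S -> R)
  (gam lam : R) (d : S -> R) :
  (forall s a, is_distr (P s a)) ->
  (forall s, is_distr (pi s)) ->
  is_distr d0 ->
  0 <= gam -> gam < 1 ->
  0 <= lam -> lam <= 1 ->
  ergodic P pi ->
  stationary P pi d ->
  exists vb : S -> R,
    (forall s, cond_EG P pi r d0 lam gam t s @[t --> \oo] --> vb s) /\
    (exists c : R, 0 <= c /\ c < 1 /\
       forall v w : S -> R,
         supnorm (fun s => Tback P pi r d lam gam v s - Tback P pi r d lam gam w s)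
         <= c * supnorm (fun s => v s - w s)) /\
    (forall (v0 : S -> R) (s : S),
       iter n (Tback P pi r d lam gam) v0 s @[n --> \oo] --> vb s).
Proof.
move=> HP Hpi Hd0 g0 g1 l0 l1 Herg Hst.
by apply: main_thm.
Qed.
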